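(* Let $\hat S$ be a finite set of graphs with a distance $D$ (nonnegative, symmetric, satisfying the triangle inequality), and let $N\ge1$. Let the diversity $\mathrm{div}$ be one of: Average $\frac{2}{N(N-1)}\sum_{i\ne j}D(G_i,G_j)$, Bottleneck $\min_{i\neq j}D(G_i,G_j)$, or Energy with parameter $\gamma>0$, $-\frac{1}{N(N-1)}\sum_{i\ne j}D(G_i,G_j)^{-\gamma}$. Let $S$ be the set of $N$ graphs selected from $\hat S$ by the greedy algorithm, and let $\bar S$ be a maximally diverse subset of $\hat S$ with $|\bar S|=N$. Then $\mathrm{div}(S)\ge\frac12\,\mathrm{div}(\bar S)$ for Average and for Bottleneck, and $\mathrm{div}(S)\ge 2^{\gamma}\,\mathrm{div}(\bar S)$ for Energy with parameter $\gamma$.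
   Context: Greedy algorithm: start with $S=\emptyset$; at the first step add a graph of $\hat S$ chosen uniformly at random; at each subsequent step add the graph $G\in\hat S$ with the best fitness with respect to the current $S$, where the fitness is $\sum_{A\in S}D(G,A)$ (to be maximized) for Average, $\min_{A\in S}D(G,A)$ (to be maximized) for Bottleneck, and $\sum_{A\in S}D(G,A)^{-\gamma}$ (to be minimized) for Energy; stop after $N$ graphs have been selected. Note that Energy values are nonpositive, so the Energy inequality says the energy sum of $S$ is at most $2^\gamma$ times that of $\bar S$. *)

(* Defs.v *)
From HB Require Import structures.
From mathcomp Require Import all_boot all_order all_algebra.
From mathcomp Require Import reals exp.
Set Implicit Arguments. Unset Strict Implicit. Unset Printing Implicit Defensive.
Import Order.TTheory GRing.Theory Num.Theory.
Local Open Scope ring_scope.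

Section Diversity.
Variables (R : realType) (T : finType) (D : T -> T -> R).

Definition div_avg (A : {set T}) : R :=
  2 / (#|A|%:R * (#|A|%:R - 1)) *
  \sum_(x in A) \sum_(y in A | y != x) D x y.

(* minimum of D over ordered pairs of distinct elements of A; 0 if there is no
   such pair (only possible when #|A| <= 1). *)
Definition div_bottleneck (A : {set T}) : R :=
  if [pick p : T * T | (p.1 \in A) && (p.2 \in A) && (p.1 != p.2)] is Some p0 then
    \big[Num.min/D p0.1 p0.2]_(p : T * T | (p.1 \in A) && (p.2 \in A) && (p.1 != p.2))
      D p.1 p.2
  else 0.

Definition div_energy (gamma : R) (A : {set T}) : R :=
  - (1 / (#|A|%:R * (#|A|%:R - 1))) *
  \sum_(x in A) \sum_(y in A | y != x) D x y `^ (- gamma).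

Definition fit_avg (S : seq T) (G : T) : R := \sum_(A <- S) D G A.
Definition fit_bottleneck (S : seq T) (G : T) : R :=
  \big[Num.min/D G (head G S)]_(A <- S) D G A.
Definition fit_energy (gamma : R) (S : seq T) (G : T) : R :=
  \sum_(A <- S) D G A `^ (- gamma).

(* s is a possible run of the greedy algorithm selecting N graphs from the whole
   finite type T (= S-hat): the first element is arbitrary (any outcome of the
   random choice), and every later element x, chosen when the current selection
   is the prefix p, is a not-yet-selected graph whose fitness is best among all
   not-yet-selected graphs; [better a b] means "b is at least as good as a"
   (ties broken arbitrarily). *)
Definition greedy_run (fit : seq T -> T -> R) (better : R -> R -> bool)
    (N : nat) (s : seq T) : Prop :=
  [/\ size s = N, uniq s &
      forall p x q, s = p ++ x :: q -> p != [::] ->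
        forall G, G \notin p -> better (fit p G) (fit p x)].

Definition max_diverse (div : {set T} -> R) (N : nat) (Sbar : {set T}) : Prop :=
  #|Sbar| = N /\ forall A : {set T}, #|A| = N -> div A <= div Sbar.

End Diversity.

(* Main.v *)
Require Import Defs.
From HB Require Import structures.
From mathcomp Require Import all_boot all_order all_algebra.
From mathcomp Require Import reals exp.
From mathcomp Require Import lra.
Import Order.TTheory GRing.Theory Num.Theory.
Local Open Scope ring_scope.

Section Aux.
Variables (R : realType) (T : finType) (D : T -> T -> R).
Hypothesis D0 : forall x y, 0 <= D x y.
Hypothesis Dxx : forall x, D x x = 0.
Hypothesis Dsym : forall x y, D x y = D y x.
Hypothesis Dtri : forall x y z, D x z <= D x y + D y z.

Lemma exists_min (x : T) (O : seq T) : O != [::] ->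
  exists2 y, y \in O & forall z, z \in O -> D x y <= D x z.
Proof.
elim: O => // a O IH _.
case: (O =P [::]) => [->|/eqP nO].
  by exists a; rewrite ?mem_head // => z; rewrite inE => /eqP ->.
have [y yO ymin] := IH nO.
case: (leP (D x a) (D x y)) => h.
  exists a; first exact: mem_head.
  move=> z; rewrite inE => /predU1P[->//|zO]; exact: le_trans h (ymin _ zO).
exists y; first by rewrite inE yO orbT.
move=> z; rewrite inE => /predU1P[->|zO]; [exact: ltW | exact: ymin].
Qed.

Lemma matching (x0 : T) (s : seq T) : forall (O : seq T), uniq O -> size O = size s ->
  exists o, perm_eq o O /\ forall i j, (i < j < size s)%N ->
    D (nth x0 o i) (nth x0 o j) <= 2 * D (nth x0 s i) (nth x0 o j) /\
    nth x0 s i != nth x0 o j.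
Proof.
elim: s => [|x s IH] O uO sO.
  by exists O; split => // i j /andP[_].
have nO : O != [::] by case: O sO uO.
have [o0 o0O o0min] : exists2 o0, o0 \in O & (forall z, z \in O -> D x o0 <= D x z) /\
    (x \in O -> o0 = x).
  case xO: (x \in O).
    by exists x => //; split => // z _; rewrite Dxx.
  have [y yO ymin] := @exists_min x O nO.
  by exists y.
case: o0min => o0min o0x.
have uO' : uniq (rem o0 O) by exact: rem_uniq.
have sO' : size (rem o0 O) = size s by rewrite size_rem // sO.
have [o' [po' Ho']] := IH _ uO' sO'.
exists (o0 :: o'); split.
  apply: (@perm_trans _ (o0 :: rem o0 O)); first by rewrite perm_cons.
  by rewrite perm_sym perm_to_rem.
move=> i j /andP[ij js]; case: j ij js => [//|j] ij js /=.
rewrite ltnS in js.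
case: i ij => [_|i ij] /=.
- have yO' : nth x0 o' j \in rem o0 O.
    by rewrite -(perm_mem po') mem_nth // (perm_size po') sO'.
  have yO : nth x0 o' j \in O by exact: mem_rem yO'.
  split.
    apply: le_trans (Dtri _ x _) _; rewrite (Dsym o0) mulr2n mulrDl mul1r lerD2r.
    exact: o0min.
  apply/eqP => exy; case xO: (x \in O).
    by move: yO'; rewrite -exy (o0x xO) mem_rem_uniqF.
  by rewrite exy yO in xO.
- by apply: Ho'; rewrite ltnS in ij; rewrite ij js.
Qed.

Definition PS (F : T -> T -> R) (s : seq T) := \sum_(x <- s) \sum_(y <- s | y != x) F x y.

Lemma PS_rcons F p x : (forall a b, F a b = F b a) -> x \notin p ->
  PS F (rcons p x) = PS F p + 2 * \sum_(y <- p) F x y.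
Proof.
move=> Fs xp; rewrite /PS -cats1 big_cat big_seq1 /=.
have e1 : forall a, \sum_(y <- p ++ [:: x] | y != a) F a y =
    \sum_(y <- p | y != a) F a y + (if x != a then F a x else 0).
  by move=> a; rewrite big_cat /= big_mkcond [X in _ + X]big_mkcond big_seq1 -big_mkcond.
rewrite e1 eqxx addr0.
under eq_bigr => a _ do rewrite e1.
rewrite big_split /=.
rewrite [X in _ + X + _](_ : _ = \sum_(y <- p) F x y); last first.
  rewrite big_seq_cond [RHS]big_seq_cond; apply: eq_bigr => a /andP[ap _].
  have -> : (x != a) by apply: contraNneq xp => ->.
  by rewrite Fs.
rewrite [X in _ + _ + X](_ : _ = \sum_(y <- p) F x y); last first.
  rewrite big_seq_cond [RHS]big_seq_cond; apply: eq_bigl => a.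
  by case ap: (a \in p) => //=; apply: contraNneq xp => <-.
by rewrite -addrA mulr2n mulrDl mul1r.
Qed.

Lemma PS_set F s : uniq s ->
  \sum_(x in [set x in s]) \sum_(y in [set x in s] | y != x) F x y = PS F s.
Proof.
move=> us; rewrite /PS big_uniq //; apply: eq_big => [x|x _]; first by rewrite inE.
rewrite [RHS]big_mkcond big_uniq // big_mkcondr; apply: eq_bigl => y.
by rewrite inE.
Qed.

Lemma sum_take (F : T -> R) (s : seq T) j x0 : (j <= size s)%N ->
  \sum_(y <- take j s) F y = \sum_(i < j) F (nth x0 s i).
Proof.
move=> js; rewrite (big_nth x0) size_takel // big_mkord; apply: eq_bigr => i _.
by rewrite nth_take.
Qed.

Lemma step_le (F G : T -> R) c (s o : seq T) j x0 :
  (j <= size s)%N -> (j <= size o)%N ->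
  (forall i, (i < j)%N -> F (nth x0 o i) <= c * G (nth x0 s i)) ->
  \sum_(y <- take j o) F y <= c * \sum_(y <- take j s) G y.
Proof.
move=> js jo H; rewrite (sum_take G s j x0 js) (sum_take F o j x0 jo) mulr_sumr.
by apply: ler_sum => i _; apply: H.
Qed.

Lemma in_take_nth x0 (s : seq T) j y : y \in take j s -> (j <= size s)%N ->
  exists2 i, (i < j)%N & y = nth x0 s i.
Proof.
move=> yt js; exists (index y (take j s)).
  by move: yt; rewrite -index_mem size_takel.
have ij : (index y (take j s) < j)%N by move: yt; rewrite -index_mem size_takel.
by rewrite -(nth_take x0 ij) nth_index.
Qed.

Lemma greedy_at (fit : seq T -> T -> R) better N s x0 j G : greedy_run fit better N s ->
  (0 < j)%N -> (j < N)%N -> G \notin take j s ->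
  better (fit (take j s) G) (fit (take j s) (nth x0 s j)).
Proof.
case=> sN us H j0 jN Gn; apply: (H _ _ (drop j.+1 s)) => //.
  by rewrite -drop_nth ?cat_take_drop // sN.
by rewrite -size_eq0 size_takel ?sN ?(ltnW jN) // -lt0n.
Qed.

Lemma pow_step (a b g : R) : 0 < a -> 0 < b -> 0 < g -> b <= 2 * a ->
  a `^ (- g) <= 2 `^ g * b `^ (- g).
Proof.
move=> a0 b0 g0 ba; rewrite !powRN.
have pa : 0 < a `^ g by apply: powR_gt0.
have pb : 0 < b `^ g by apply: powR_gt0.
have p2 : 0 < 2 `^ g :> R by apply: powR_gt0.
have h : b `^ g <= 2 `^ g * a `^ g.
  rewrite -powRM ?(ltW a0) //; apply: ge0_ler_powR;
    [exact: ltW | by rewrite nnegrE ltW | by rewrite nnegrE mulr_ge0 // ltW | exact: ba].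
rewrite -[X in _ <= X * _]invrK -invfM ler_pV2 ?inE ?unitfE ?gt_eqF ?mulr_gt0 ?invr_gt0 //.
by rewrite mulrC ler_pdivrMr // mulrC.
Qed.


Lemma bott_le (A : {set T}) x y : x \in A -> y \in A -> x != y -> div_bottleneck D A <= D x y.
Proof.
move=> xA yA xy; rewrite /div_bottleneck; case: pickP => [p0 _|/(_ (x, y))].
  have := @bigmin_le_cond _ R (T * T)%type (D p0.1 p0.2) (x, y)
    (fun p : T * T => (p.1 \in A) && (p.2 \in A) && (p.1 != p.2)) (fun p => D p.1 p.2).
  by move=> h; apply: h; rewrite /= xA yA xy.
by rewrite /= xA yA xy.
Qed.

Lemma bott_ge (A : {set T}) m : (forall x y, x \in A -> y \in A -> x != y -> m <= D x y) ->
  (m <= 0) \/ (1 < #|A|)%N -> m <= div_bottleneck D A.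
Proof.
move=> H Hm; rewrite /div_bottleneck; case: pickP => [p0 /andP[/andP[p1 p2] p12]|none].
  have := @le_bigmin _ R (T * T)%type (index_enum _) (fun p => D p.1 p.2) (D p0.1 p0.2) m
    (fun p : T * T => (p.1 \in A) && (p.2 \in A) && (p.1 != p.2)).
  move=> h; apply: h; first exact: H.
  by move=> p /andP[/andP[q1 q2] q12]; apply: H.
case: Hm => // /card_gt1P [x [y [xA yA xy]]].
by have := none (x, y); rewrite /= xA yA xy.
Qed.

Lemma nth_notin_take (x0 : T) s j : uniq s -> (j < size s)%N -> nth x0 s j \notin take j s.
Proof.
by move=> us js; have := take_uniq j.+1 us; rewrite (take_nth x0 js) rcons_uniq => /andP[].
Qed.

Lemma setup N (s : seq T) (Sbar : {set T}) (x0 : T) : size s = N -> #|Sbar| = N ->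
  exists o, [/\ uniq o, size o = N, Sbar = [set x in o] &
    forall i j, (i < j < N)%N ->
      D (nth x0 o i) (nth x0 o j) <= 2 * D (nth x0 s i) (nth x0 o j) /\
      nth x0 s i != nth x0 o j].
Proof.
move=> sN cS.
have [o [po Ho]] := @matching x0 s (enum Sbar) (enum_uniq _) (etrans (esym (cardE _)) (etrans cS (esym sN))).
exists o; split.
- by rewrite (perm_uniq po) enum_uniq.
- by rewrite (perm_size po) -cardE.
- by apply/setP => x; rewrite inE (perm_mem po) mem_enum.
- by move=> i j; rewrite -sN; apply: Ho.
Qed.

Lemma o_notin (x0 : T) s o j : (j <= size s)%N ->
  (forall i, (i < j)%N -> nth x0 s i != nth x0 o j) -> nth x0 o j \notin take j s.
Proof.
move=> js H; apply/negP => /(in_take_nth x0) [//|i ij e].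
by have := H i ij; rewrite e eqxx.
Qed.

Lemma card_set_seq (s : seq T) : uniq s -> #|[set x in s]| = size s.
Proof. by move=> us; rewrite cardsE; apply/card_uniqP. Qed.


Lemma some_elt N (s : seq T) : (1 <= N)%N -> size s = N -> T.
Proof. by case: s => [|a l] /= N1 sN; [move: N1; rewrite -sN | exact: a]. Qed.

Lemma part_avg N : (1 <= N)%N -> forall s Sbar,
  greedy_run (fit_avg D) (fun a b => a <= b) N s ->
  max_diverse (div_avg D) N Sbar ->
  div_avg D [set x in s] >= 1 / 2 * div_avg D Sbar.
Proof.
move=> N1 s Sbar gr [cS _]; have [sN us _] := gr.
have x0 := @some_elt N s N1 sN.
have [o [uo oN So Ho]] := @setup N s Sbar x0 sN cS.
have key : forall j, (j <= N)%N -> PS D (take j o) <= 2 * PS D (take j s).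
  elim=> [_|j IH jN]; first by rewrite !take0 /PS !big_nil mulr0.
  have js : (j < size s)%N by rewrite sN.
  have jo : (j < size o)%N by rewrite oN.
  rewrite (take_nth x0 js) (take_nth x0 jo) !PS_rcons // ?nth_notin_take //.
  suff h : \sum_(y <- take j o) D (nth x0 o j) y <= 2 * \sum_(y <- take j s) D (nth x0 s j) y.
    rewrite mulrDr; apply: lerD; first exact: IH (ltnW jN).
    by rewrite mulrCA ler_wpM2l.
  case: j {IH} jN js jo => [|j] jN js jo; first by rewrite !take0 !big_nil mulr0.
  apply: le_trans (@step_le (D (nth x0 o j.+1)) (D (nth x0 o j.+1)) 2 s o j.+1 x0 (ltnW js) (ltnW jo) _) _.
    move=> i ij; rewrite Dsym (Dsym (nth x0 o j.+1)); apply: (Ho _ _ _).1.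
    by rewrite ij jN.
  rewrite ler_wpM2l //.
  apply: (@greedy_at _ _ N s x0 j.+1 _ gr _ jN) => //.
  apply: o_notin; first exact: ltnW.
  by move=> i ij; apply: (Ho _ _ _).2; rewrite ij jN.
have := key N (leqnn N); rewrite !take_oversize ?sN ?oN // => K.
rewrite /div_avg So !card_set_seq // !PS_set // sN oN.
have c0 : 0 <= 2 / (N%:R * (N%:R - 1)) :> R.
  by rewrite divr_ge0 // mulr_ge0 // subr_ge0 ler1n.
rewrite mulrCA ler_wpM2l //; lra.
Qed.

Lemma part_energy N : (1 <= N)%N -> forall gamma : R, 0 < gamma ->
  (forall x y, x != y -> 0 < D x y) -> forall s Sbar,
  greedy_run (fit_energy D gamma) (fun a b => b <= a) N s ->
  max_diverse (div_energy D gamma) N Sbar ->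
  div_energy D gamma [set x in s] >= 2 `^ gamma * div_energy D gamma Sbar.
Proof.
move=> N1 g g0 Dpos s Sbar gr [cS _]; have [sN us _] := gr.
have x0 := @some_elt N s N1 sN.
have [o [uo oN So Ho]] := @setup N s Sbar x0 sN cS.
pose F := fun x y => D x y `^ (- g).
have Fs : forall a b, F a b = F b a by move=> a b; rewrite /F Dsym.
have t0 : 0 <= 2 `^ g :> R by apply: powR_ge0.
have key : forall j, (j <= N)%N -> PS F (take j s) <= 2 `^ g * PS F (take j o).
  elim=> [_|j IH jN]; first by rewrite !take0 /PS !big_nil mulr0.
  have js : (j < size s)%N by rewrite sN.
  have jo : (j < size o)%N by rewrite oN.
  rewrite (take_nth x0 js) (take_nth x0 jo) !PS_rcons // ?nth_notin_take //.
  suff h : \sum_(y <- take j s) F (nth x0 s j) y <= 2 `^ g * \sum_(y <- take j o) F (nth x0 o j) y.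
    rewrite mulrDr; apply: lerD; first exact: IH (ltnW jN).
    by rewrite mulrCA ler_wpM2l.
  case: j {IH} jN js jo => [|j] jN js jo; first by rewrite !take0 !big_nil mulr0.
  apply: le_trans _ (@step_le (F (nth x0 o j.+1)) (F (nth x0 o j.+1)) (2 `^ g) o s j.+1 x0 (ltnW jo) (ltnW js) _).
    apply: (@greedy_at _ _ N s x0 j.+1 _ gr _ jN) => //.
    apply: o_notin; first exact: ltnW.
    by move=> i ij; apply: (Ho _ _ _).2; rewrite ij jN.
  move=> i ij.
  have ijN : (i < j.+1 < N)%N by rewrite ij jN.
  have [h1 h2] := Ho _ _ ijN.
  rewrite /F; apply: pow_step => //.
  - by apply: Dpos; rewrite eq_sym.
  - apply: Dpos; rewrite nth_uniq ?oN //; last exact: ltn_trans ij jN.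
    by rewrite eq_sym neq_ltn ij.
  - by rewrite Dsym (Dsym _ (nth x0 s i)).
have := key N (leqnn N); rewrite !take_oversize ?sN ?oN // => K.
rewrite /div_energy So !card_set_seq // !(PS_set F) // sN oN.
have c0 : 0 <= 1 / (N%:R * (N%:R - 1)) :> R.
  by rewrite divr_ge0 // mulr_ge0 // subr_ge0 ler1n.
rewrite !mulNr mulrN lerN2 mulrCA.
by apply: ler_wpM2l.
Qed.


Lemma part_bott N : (1 <= N)%N -> forall s Sbar,
  greedy_run (fit_bottleneck D) (fun a b => a <= b) N s ->
  max_diverse (div_bottleneck D) N Sbar ->
  div_bottleneck D [set x in s] >= 1 / 2 * div_bottleneck D Sbar.
Proof.
move=> N1 s Sbar gr [cS _]; have [sN us _] := gr.
have x0 := @some_elt N s N1 sN.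
have [o [uo oN So Ho]] := @setup N s Sbar x0 sN cS.
rewrite So; set m := div_bottleneck D [set x in o].
have claim2 : forall j y, (j < N)%N -> y \in take j s -> 1 / 2 * m <= D (nth x0 o j) y.
  move=> j y jN /(in_take_nth x0) [|i ij ->]; first by rewrite sN ltnW.
  have ijN : (i < j < N)%N by rewrite ij jN.
  have [h1 h2] := Ho _ _ ijN.
  have h3 : m <= D (nth x0 o i) (nth x0 o j).
    apply: bott_le; rewrite ?inE ?mem_nth ?oN //; first exact: ltn_trans ij jN.
    by rewrite nth_uniq ?oN ?(ltn_trans ij jN) // neq_ltn ij.
  rewrite (Dsym _ (nth x0 s i)); lra.
have claim : forall i j, (i < j < N)%N -> 1 / 2 * m <= D (nth x0 s i) (nth x0 s j).
  move=> i j /andP[ij jN].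
  have j0 : (0 < j)%N by exact: leq_ltn_trans ij.
  have g1 := @greedy_at _ _ N s x0 j (nth x0 o j) gr j0 jN.
  have g2 : fit_bottleneck D (take j s) (nth x0 o j) <= fit_bottleneck D (take j s) (nth x0 s j).
    apply: g1; apply: o_notin; first by rewrite sN ltnW.
    by move=> i' i'j; apply: (Ho _ _ _).2; rewrite i'j jN.
  have it : nth x0 s i \in take j s.
    by rewrite -(nth_take x0 ij) mem_nth // size_takel // sN ltnW.
  have ne : take j s != [::] by apply/negP => /eqP e; rewrite e in it.
  have L1 : 1 / 2 * m <= fit_bottleneck D (take j s) (nth x0 o j).
    rewrite /fit_bottleneck big_seq.
    have := @le_bigmin _ R T (take j s) (fun A => D (nth x0 o j) A)
      (D (nth x0 o j) (head (nth x0 o j) (take j s))) (1 / 2 * m) (fun A => A \in take j s).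
    move=> h; apply: h.
      apply: claim2 => //; case: (take j s) ne => //= a l _; exact: mem_head.
    by move=> a ha; apply: claim2.
  apply: le_trans L1 (le_trans g2 _); rewrite Dsym /fit_bottleneck.
  have := @ge_bigmin_seq _ R T (take j s) (D (nth x0 s j) (head (nth x0 s j) (take j s)))
    (nth x0 s i) xpredT (fun A => D (nth x0 s j) A) it isT.
  by [].
apply: bott_ge.
  move=> x y; rewrite !inE => xs ys xy.
  have xi := nth_index x0 xs; have yi := nth_index x0 ys.
  have ix : (index x s < N)%N by rewrite -sN index_mem.
  have iy : (index y s < N)%N by rewrite -sN index_mem.
  case: (ltngtP (index x s) (index y s)) => h.
  - by rewrite -xi -yi; apply: claim; rewrite h iy.
  - by rewrite Dsym -xi -yi; apply: claim; rewrite h ix.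
  - by move: xy; rewrite -xi -yi h eqxx.
case: (ltnP 1 N) => h; first by right; rewrite card_set_seq // sN.
left; rewrite /m /div_bottleneck; case: pickP => [p /andP[/andP[p1 p2] p12]|_]; last by rewrite mulr0.
have : (1 < #|[set x in o]|)%N by apply/card_gt1P; exists p.1, p.2.
by rewrite card_set_seq // oN ltnNge h.
Qed.

End Aux.

Theorem theorem2 (R : realType) (T : finType) (D : T -> T -> R) (N : nat) :
  (forall x y, 0 <= D x y) ->
  (forall x, D x x = 0) ->
  (forall x y, D x y = D y x) ->
  (forall x y z, D x z <= D x y + D y z) ->
  (1 <= N)%N ->
  [/\ (forall (s : seq T) (Sbar : {set T}),
         greedy_run (fit_avg D) (fun a b => a <= b) N s ->
         max_diverse (div_avg D) N Sbar ->
         div_avg D [set x in s] >= 1 / 2 * div_avg D Sbar),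
      (forall (s : seq T) (Sbar : {set T}),
         greedy_run (fit_bottleneck D) (fun a b => a <= b) N s ->
         max_diverse (div_bottleneck D) N Sbar ->
         div_bottleneck D [set x in s] >= 1 / 2 * div_bottleneck D Sbar) &
      (forall gamma : R, 0 < gamma ->
         (forall x y, x != y -> 0 < D x y) ->
         forall (s : seq T) (Sbar : {set T}),
         greedy_run (fit_energy D gamma) (fun a b => b <= a) N s ->
         max_diverse (div_energy D gamma) N Sbar ->
         div_energy D gamma [set x in s] >= 2 `^ gamma * div_energy D gamma Sbar)].
Proof.
move=> D0 Dxx Dsym Dtri N1; split.
- exact: part_avg.
- exact: part_bott.
- exact: part_energy.
Qed.
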